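(* Let $p \neq 2$ be a prime and let $E_T$ be the elliptic curve over $\mathbf{F}_p(T)$ given by $y^2 = x^3 + T x^2 - T^3 x$. The point $Q = (-T, T^2) \in E_T(\mathbf{F}_p(T))$ has infinite order. In particular, for any field $L$ of characteristic $p$ and any $t \in L$ transcendental over $\mathbf{F}_p$, the point $Q_t = (-t, t^2)$ on the elliptic curve $E_t : y^2 = x^3 + t x^2 - t^3 x$ over $L$ (obtained via the embedding $\mathbf{F}_p(T) \to L$, $T \mapsto t$) has infinite order in $E_t(L)$. *)

(* Defs.v *)
From HB Require Import structures.
From mathcomp Require Import all_boot all_order all_algebra.
From mathcomp Require Import fraction.
Set Implicit Arguments. Unset Strict Implicit. Unset Printing Implicit Defensive.
Import Order.TTheory GRing.Theory Num.Theory.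
Local Open Scope ring_scope.

(* Points of the Weierstrass curve  y^2 = x^3 + a2 x^2 + a4 x  over a field K:
   None is the point at infinity O, Some (x, y) an affine point. *)
Definition ec_point (K : fieldType) := option (K * K).

Definition on_curve (K : fieldType) (a2 a4 : K) (P : ec_point K) : Prop :=
  match P with
  | None => True
  | Some (x, y) => y ^+ 2 = x ^+ 3 + a2 * x ^+ 2 + a4 * x
  end.

Definition ec_add (K : fieldType) (a2 a4 : K) (P Q : ec_point K) : ec_point K :=
  match P, Q with
  | None, _ => Q
  | _, None => P
  | Some (x1, y1), Some (x2, y2) =>
    if x1 == x2 then
      if y1 + y2 == 0 then None
      else
        let l := (3%:R * x1 ^+ 2 + 2%:R * a2 * x1 + a4) / (2%:R * y1) in
        let x3 := l ^+ 2 - a2 - x1 - x2 in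
        Some (x3, - (y1 + l * (x3 - x1)))
    else
      let l := (y2 - y1) / (x2 - x1) in
      let x3 := l ^+ 2 - a2 - x1 - x2 in
      Some (x3, - (y1 + l * (x3 - x1)))
  end.

Definition ec_mul (K : fieldType) (a2 a4 : K) (n : nat) (P : ec_point K) :=
  iter n (ec_add a2 a4 P) None.

Definition infinite_order (K : fieldType) (a2 a4 : K) (P : ec_point K) : Prop :=
  forall n : nat, (0 < n)%N -> ec_mul a2 a4 n P <> None.

Definition FpT (p : nat) := {fraction {poly 'F_p}}.
Definition varT (p : nat) : FpT p := @FracField.tofrac _ ('X : {poly 'F_p}).

(* The prime-field embedding F_p -> L (for L of characteristic p). *)
Definition Fp_to (p : nat) (L : fieldType) (c : 'F_p) : L := (nat_of_ord c)%:R.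

Definition transcendental_Fp (p : nat) (L : fieldType) (t : L) : Prop :=
  forall q : {poly 'F_p}, q != 0 -> (map_poly (@Fp_to p L) q).[t] != 0.

(* Main.v *)
Require Import Defs.
From HB Require Import structures.
From mathcomp Require Import all_boot all_order all_algebra.
From mathcomp Require Import fraction.
From mathcomp Require Import ring.
Import Order.TTheory GRing.Theory Num.Theory.
Local Open Scope ring_scope.
Set Implicit Arguments. Unset Strict Implicit.


Definition fc {K : fieldType} (a b z : K) := z ^+ 3 + a * z ^+ 2 + b * z.

Lemma coeffs_chord (K : fieldType) (a b x1 x2 l n : K) :
  x1 != x2 -> (l * x1 + n) ^+ 2 = fc a b x1 -> (l * x2 + n) ^+ 2 = fc a b x2 ->
  let x3 := l ^+ 2 - a - x1 - x2 in
  x1 * x2 + x1 * x3 + x2 * x3 = b - 2 * l * n /\ x1 * x2 * x3 = n ^+ 2.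
Proof.
move=> hx c1 c2 x3.
set A := b - 2 * l * n - (x1 * x2 + x1 * x3 + x2 * x3).
set B := x1 * x2 * x3 - n ^+ 2.
have hD : forall z, fc a b z - (l * z + n) ^+ 2 - (z - x1) * (z - x2) * (z - x3) = A * z + B.
  by move=> z; rewrite /fc /A /B /x3; ring.
have d1 : A * x1 + B = 0 by rewrite -hD c1 subrr; ring.
have d2 : A * x2 + B = 0 by rewrite -hD c2 subrr; ring.
have hA : A = 0.
  have : A * (x1 - x2) = 0.
    by rewrite (_ : A * (x1 - x2) = (A * x1 + B) - (A * x2 + B)); [rewrite d1 d2 subrr | ring].
  by move/eqP; rewrite mulf_eq0 => /orP [/eqP //|]; rewrite subr_eq0 (negbTE hx).
have hB : B = 0 by move: d1; rewrite hA mul0r add0r.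
split.
  by apply/eqP; rewrite -subr_eq0 -oppr_eq0; apply/eqP; rewrite -hA /A; ring.
by apply/eqP; rewrite -subr_eq0; apply/eqP; rewrite -hB.
Qed.

Lemma coeffs_tangent (K : fieldType) (a b x1 l n : K) :
  (l * x1 + n) ^+ 2 = fc a b x1 ->
  2 * l * (l * x1 + n) = 3 * x1 ^+ 2 + 2 * a * x1 + b ->
  let x3 := l ^+ 2 - a - x1 - x1 in
  x1 * x1 + x1 * x3 + x1 * x3 = b - 2 * l * n /\ x1 * x1 * x3 = n ^+ 2.
Proof.
move=> c1 hd x3.
have e1 : x1 * x1 + x1 * x3 + x1 * x3 - (b - 2 * l * n)
   = 2 * l * (l * x1 + n) - (3 * x1 ^+ 2 + 2 * a * x1 + b) by rewrite /x3; ring.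
have e2 : x1 * x1 * x3 - n ^+ 2
   = x1 * (2 * l * (l * x1 + n) - (3 * x1 ^+ 2 + 2 * a * x1 + b))
     - ((l * x1 + n) ^+ 2 - fc a b x1) by rewrite /x3 /fc; ring.
split; apply/eqP; rewrite -subr_eq0; apply/eqP; [rewrite e1 hd | rewrite e2 hd c1]; ring.
Qed.

Lemma ec_add_fwd (K : fieldType) (a b x1 y1 x2 y2 x3 y3 : K) :
  (2 : K) != 0 -> y1 ^+ 2 = fc a b x1 -> y2 ^+ 2 = fc a b x2 ->
  ec_add a b (Some (x1, y1)) (Some (x2, y2)) = Some (x3, y3) ->
  exists l n : K, [/\ y1 = l * x1 + n, y2 = l * x2 + n, y3 = - (l * x3 + n)
    & [/\ x1 + x2 + x3 = l ^+ 2 - a, x1 * x2 + x1 * x3 + x2 * x3 = b - 2 * l * n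
    & x1 * x2 * x3 = n ^+ 2]].
Proof.
move=> h2 c1 c2; rewrite /ec_add /=.
case: (eqVneq x1 x2) => [ex|hx].
  subst x2; case: eqP => // hy.
  have ey : y2 = y1.
    have e : (y2 - y1) * (y2 + y1) = y2 ^+ 2 - y1 ^+ 2 by ring.
    have : (y2 - y1) * (y2 + y1) = 0 by rewrite e c1 c2 subrr.
    move/eqP; rewrite mulf_eq0 => /orP [/eqP/eqP|/eqP h]; first by rewrite subr_eq0 => /eqP.
    by exfalso; apply: hy; rewrite addrC.
  subst y2.
  have y1n0 : y1 != 0 by apply/eqP => h0; apply: hy; rewrite h0 addr0.
  case => <- <-.
  set l := (_ / _).
  have hl : 2 * l * y1 = 3 * x1 ^+ 2 + 2 * a * x1 + b.
    by rewrite /l; field; rewrite y1n0 h2.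
  exists l, (y1 - l * x1).
  have ey1 : l * x1 + (y1 - l * x1) = y1 by ring.
  have := @coeffs_tangent K a b x1 l (y1 - l * x1); rewrite ey1 => /(_ c1 hl) [s2 s3].
  by split => //; first (by ring); split => //; ring.
case => <- <-.
set l := (_ / _).
have hl : l * (x2 - x1) = y2 - y1 by rewrite /l divfK // subr_eq0 eq_sym.
exists l, (y1 - l * x1).
have ey1 : l * x1 + (y1 - l * x1) = y1 by ring.
have ey2 : l * x2 + (y1 - l * x1) = y2.
  have e : l * x2 + (y1 - l * x1) = y1 + l * (x2 - x1) by ring.
  by rewrite e hl; ring.
have := @coeffs_chord K a b x1 x2 l (y1 - l * x1) hx; rewrite ey1 ey2 => /(_ c1 c2) [s2 s3].
by split => //; first (by ring); split => //; ring.
Qed.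

Lemma sum_id (K : fieldType) (a b x1 x2 x3 l n : K) :
  x1 + x2 + x3 = l ^+ 2 - a -> x1 * x2 + x1 * x3 + x2 * x3 = b - 2 * l * n ->
  x1 * x2 * x3 = n ^+ 2 ->
  forall z, fc a b z - (l * z + n) ^+ 2 = (z - x1) * (z - x2) * (z - x3).
Proof.
move=> s1 s2 s3 z.
have ha : a = l ^+ 2 - (x1 + x2 + x3) by rewrite s1; ring.
have hb : b = x1 * x2 + x1 * x3 + x2 * x3 + 2 * l * n by rewrite s2; ring.
apply/eqP; rewrite -subr_eq0; apply/eqP.
have e : fc a b z - (l * z + n) ^+ 2 - (z - x1) * (z - x2) * (z - x3)
   = x1 * x2 * x3 - n ^+ 2 by rewrite /fc ha hb; ring.
by rewrite e s3 subrr.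
Qed.

Lemma ec_add_on (K : fieldType) (a b : K) (P R : ec_point K) :
  (2 : K) != 0 -> on_curve a b P -> on_curve a b R -> on_curve a b (ec_add a b P R).
Proof.
move=> h2; case: P => [[x1 y1]|] //; case: R => [[x2 y2]|] // c1 c2.
case E : (ec_add a b _ _) => [[x3 y3]|] //=.
have [l [n [e1 e2 e3 [s1 s2 s3]]]] := ec_add_fwd h2 c1 c2 E.
have := sum_id s1 s2 s3 x3; rewrite !subrr mulr0 => /eqP; rewrite subr_eq0 => /eqP.
by rewrite e3 sqrrN /fc => <-.
Qed.

Lemma descent (K : fieldType) (a b x1 y1 x2 y2 x3 y3 e : K) :
  (2 : K) != 0 -> y1 ^+ 2 = fc a b x1 -> y2 ^+ 2 = fc a b x2 ->
  ec_add a b (Some (x1, y1)) (Some (x2, y2)) = Some (x3, y3) ->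
  fc a b e = 0 ->
  exists s, (x1 - e) * (x2 - e) * (x3 - e) = s ^+ 2.
Proof.
move=> h2 c1 c2 E he.
have [l [n [e1 e2 e3 [s1 s2 s3]]]] := ec_add_fwd h2 c1 c2 E.
exists (l * e + n).
have := sum_id s1 s2 s3 e; rewrite he sub0r => h.
have -> : (x1 - e) * (x2 - e) * (x3 - e) = - ((e - x1) * (e - x2) * (e - x3)) by ring.
by rewrite -h opprK.
Qed.

Definition nsing (K : fieldType) (a b : K) :=
  forall z, fc a b z = 0 -> 3 * z ^+ 2 + 2 * a * z + b != 0.

Lemma ec_add_back (K : fieldType) (a b x1 x2 x3 l n : K) :
  (2 : K) != 0 -> nsing a b ->
  x1 + x2 + x3 = l ^+ 2 - a -> x1 * x2 + x1 * x3 + x2 * x3 = b - 2 * l * n ->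
  x1 * x2 * x3 = n ^+ 2 ->
  ec_add a b (Some (x1, - (l * x1 + n))) (Some (x3, - (l * x3 + n)))
  = Some (x2, l * x2 + n).
Proof.
move=> h2 hns s1 s2 s3.
have hid := sum_id s1 s2 s3.
have ha : a = l ^+ 2 - (x1 + x2 + x3) by rewrite s1; ring.
rewrite /ec_add /=.
case: (eqVneq x1 x3) => [e13|h13].
  subst x3.
  have hb : b = x1 * x2 + x1 * x1 + x2 * x1 + 2 * l * n by rewrite s2; ring.
  have hf : 3 * x1 ^+ 2 + 2 * a * x1 + b = 2 * l * (l * x1 + n) by rewrite ha hb; ring.
  case: eqP => hy.
    exfalso.
    have y0 : l * x1 + n = 0.
      have e : 2 * (l * x1 + n) = - (- (l * x1 + n) + - (l * x1 + n)) by ring.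
      have : 2 * (l * x1 + n) = 0 by rewrite e hy oppr0.
      by move/eqP; rewrite mulf_eq0 (negbTE h2) /= => /eqP.
    have f0 : fc a b x1 = 0.
      by have := hid x1; rewrite y0 subrr !mul0r expr0n /= subr0.
    by have := hns x1 f0; rewrite hf y0 mulr0 eqxx.
  have yn0 : l * x1 + n != 0.
    by apply/eqP => y0; apply: hy; rewrite y0 oppr0 addr0.
  have hl : (3 * x1 ^+ 2 + 2 * a * x1 + b) / (2 * - (l * x1 + n)) = - l.
    by rewrite hf; field; rewrite oppr_eq0 yn0 h2.
  rewrite hl; congr (Some (_, _)); rewrite ha; ring.
have hl : (- (l * x3 + n) - - (l * x1 + n)) / (x3 - x1) = - l.
  by field; rewrite subr_eq0 eq_sym.
rewrite hl; congr (Some (_, _)); rewrite ha; ring.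
Qed.

Definition negp {K : fieldType} (P : ec_point K) : ec_point K :=
  match P with None => None | Some (x, y) => Some (x, - y) end.

Lemma ec_add_neg (K : fieldType) (a b : K) (P R : ec_point K) :
  ec_add a b (negp P) (negp R) = negp (ec_add a b P R).
Proof.
case: P => [[x1 y1]|] //; case: R => [[x2 y2]|] //.
rewrite /ec_add /=; case: eqP => ex.
  rewrite -opprD oppr_eq0; case: eqP => // hy.
  rewrite mulrN invrN mulrN sqrrN; congr (Some (_, _)); ring.
have -> : - y2 - - y1 = - (y2 - y1) by ring.
rewrite mulNr sqrrN; congr (Some (_, _)); ring.
Qed.

Lemma ec_cancel (K : fieldType) (a b x1 y1 : K) (R : ec_point K) :
  (2 : K) != 0 -> nsing a b -> y1 ^+ 2 = fc a b x1 -> on_curve a b R ->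
  ec_add a b (Some (x1, - y1)) (ec_add a b (Some (x1, y1)) R) = R.
Proof.
move=> h2 hns c1; case: R => [[x2 y2]|] c2; last first.
  by rewrite /ec_add /= eqxx addNr eqxx.
case E : (ec_add a b (Some (x1, y1)) _) => [[x3 y3]|].
  have [l [n [e1 e2 e3 [s1 s2 s3]]]] := ec_add_fwd h2 c1 c2 E.
  by rewrite e1 e2 e3 (ec_add_back h2 hns s1 s2 s3).
move: E; rewrite /ec_add /=; case: eqP => // <-; case: eqP => // hy _.
by congr (Some (_, _)); apply/eqP; rewrite eq_sym -addr_eq0 addrC hy.
Qed.

Definition mapp {K L : fieldType} (f : K -> L) (P : ec_point K) : ec_point L :=
  match P with None => None | Some (x, y) => Some (f x, f y) end.


Lemma morph_facts (K L : fieldType) (f : K -> L) :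
  {morph f : x y / x + y} -> {morph f : x y / x * y} -> f 1 = 1 ->
  [/\ f 0 = 0, {morph f : x / - x}, {morph f : x / x^-1},
      forall n, f n%:R = n%:R & forall x y, (f x == f y) = (x == y)].
Proof.
move=> fD fM f1.
have f0 : f 0 = 0.
  by apply: (@addrI _ (f 0)); rewrite addr0 -fD addr0.
have fN : {morph f : x / - x}.
  by move=> x; apply/eqP; rewrite -subr_eq0 opprK addrC -fD subrr f0.
have fnz : forall x, x != 0 -> f x != 0.
  move=> x hx; apply/eqP => h.
  by have := fM x x^-1; rewrite divff // f1 h mul0r => /eqP; rewrite oner_eq0.
have fV : {morph f : x / x^-1}.
  move=> x; case: (eqVneq x 0) => [->|hx]; first by rewrite invr0 f0 invr0.
  apply: (@mulfI _ (f x)); first exact: fnz.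
  by rewrite -fM !divff ?fnz.
split => //.
  by elim=> [|n IH]; rewrite ?f0 // -addn1 !natrD fD IH f1.
move=> x y; apply/eqP/eqP => [h|->] //.
apply/eqP; rewrite -subr_eq0; apply/negPn/negP => /fnz.
by rewrite fD fN h subrr eqxx.
Qed.

Lemma ec_add_map (K L : fieldType) (f : K -> L) (a b : K) (P R : ec_point K) :
  {morph f : x y / x + y} -> {morph f : x y / x * y} -> f 1 = 1 ->
  ec_add (f a) (f b) (mapp f P) (mapp f R) = mapp f (ec_add a b P R).
Proof.
move=> fD fM f1; have [f0 fN fV fn feq] := morph_facts fD fM f1.
have fX : forall x k, f (x ^+ k) = f x ^+ k.
  by move=> x; elim=> [|k IH]; rewrite ?expr0 ?f1 // !exprS fM IH.
case: P => [[x1 y1]|] //; case: R => [[x2 y2]|] //.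
rewrite /ec_add /= feq -f0 -fD feq.
case: eqP => _; first case: eqP => _ //.
  by rewrite /= !(fD, fN, fM, fV, fX, fn).
by rewrite /= !(fD, fN, fM, fV, fX, fn).
Qed.

Lemma ec_mul_map (K L : fieldType) (f : K -> L) (a b : K) (n : nat) (P : ec_point K) :
  {morph f : x y / x + y} -> {morph f : x y / x * y} -> f 1 = 1 ->
  ec_mul (f a) (f b) n (mapp f P) = mapp f (ec_mul a b n P).
Proof.
move=> fD fM f1; elim: n => [|n IH] //=.
by rewrite /ec_mul /= -/(ec_mul _ _ n _) IH ec_add_map.
Qed.

Local Open Scope quotient_scope.

Lemma frac_mul_den (R : idomainType) (r : {ratio R}) :
  (\pi_{fraction R} r : {fraction R}) * FracField.tofrac (\d_r) = FracField.tofrac (\n_r).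
Proof.
unlock FracField.tofrac.
rewrite -[_ * _]FracField.pi_mul.
apply/eqmodP => /=; rewrite FracField.equivfE.
rewrite /FracField.mulf !numden_Ratio ?oner_neq0 ?mulf_neq0 ?oner_neq0 ?denom_ratioP //.
by rewrite !mulr1 mulrC.
Qed.

Lemma frac_repr (R : idomainType) (x : {fraction R}) :
  exists n d : R, d != 0 /\ x = FracField.tofrac n / FracField.tofrac d.
Proof.
exists (\n_(repr x)), (\d_(repr x)); split; first exact: denom_ratioP.
rewrite -frac_mul_den reprK mulfK // tofrac_eq0; exact: denom_ratioP.
Qed.

Definition Phi (R : idomainType) (L : fieldType) (phi : R -> L) (x : {fraction R}) : L :=
  phi (\n_(repr x)) / phi (\d_(repr x)).

Lemma PhiE (R : idomainType) (L : fieldType) (phi : R -> L) :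
  {morph phi : x y / x * y} -> (forall q, q != 0 -> phi q != 0) ->
  forall n d, d != 0 ->
  Phi phi (FracField.tofrac n / FracField.tofrac d) = phi n / phi d.
Proof.
move=> pM pnz n d hd.
rewrite /Phi.
set x := FracField.tofrac n / FracField.tofrac d.
have hd' : \d_(repr x) != 0 by exact: denom_ratioP.
have ex : x = FracField.tofrac (\n_(repr x)) / FracField.tofrac (\d_(repr x)).
  by rewrite -frac_mul_den reprK mulfK // tofrac_eq0.
have hdF : FracField.tofrac d != 0 by rewrite tofrac_eq0.
have hdF' : FracField.tofrac (\d_(repr x)) != 0 by rewrite tofrac_eq0.
have e : n * \d_(repr x) = \n_(repr x) * d.
  apply/eqP; rewrite -tofrac_eq !tofracM; apply/eqP.
  move: ex; rewrite /x => /(congr1 (fun z => z * FracField.tofrac d * FracField.tofrac (\d_(repr x)))).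
rewrite divfK // => ->; by rewrite mulrAC divfK.
apply/eqP; rewrite eq_sym; apply/eqP.
have pd := pnz _ hd; have pd' := pnz _ hd'.
apply: (@mulIf _ (phi d)) => //; apply: (@mulIf _ (phi (\d_(repr x)))) => //.
rewrite divfK // -mulrA [phi d * _]mulrC mulrA divfK // -!pM e.
by rewrite mulrC.
Qed.

Lemma Phi_props (R : idomainType) (L : fieldType) (phi : R -> L) :
  {morph phi : x y / x + y} -> {morph phi : x y / x * y} -> phi 1 = 1 ->
  (forall q, q != 0 -> phi q != 0) ->
  [/\ {morph Phi phi : x y / x + y}, {morph Phi phi : x y / x * y},
      Phi phi 1 = 1 & forall q, Phi phi (FracField.tofrac q) = phi q].
Proof.
move=> pD pM p1 pnz.
have tE : forall q, Phi phi (FracField.tofrac q) = phi q.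
  move=> q; rewrite -[FracField.tofrac q]divr1 -tofrac1 PhiE ?oner_neq0 //.
  by rewrite p1 divr1.
split => //; last by rewrite -tofrac1 tE.
  move=> x y; have [n1 [d1 [h1 ->]]] := frac_repr x; have [n2 [d2 [h2 ->]]] := frac_repr y.
  have hF1 : FracField.tofrac d1 != 0 by rewrite tofrac_eq0.
  have hF2 : FracField.tofrac d2 != 0 by rewrite tofrac_eq0.
  rewrite addf_div // -!tofracM -tofracD !PhiE ?mulf_neq0 // pD !pM.
  have q1 := pnz _ h1; have q2 := pnz _ h2.
  by rewrite addf_div.
move=> x y; have [n1 [d1 [h1 ->]]] := frac_repr x; have [n2 [d2 [h2 ->]]] := frac_repr y.
rewrite mulf_div -!tofracM !PhiE ?mulf_neq0 // !pM.
by rewrite mulf_div.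
Qed.

Local Close Scope quotient_scope.


Lemma Fp_val_add (p : nat) (hp : prime p) (a b : 'F_p) :
  nat_of_ord (a + b) = ((a + b) %% p)%N.
Proof. by rewrite /=; congr (_ %% _)%N; exact: Fp_cast. Qed.
Lemma Fp_val_mul (p : nat) (hp : prime p) (a b : 'F_p) :
  nat_of_ord (a * b) = ((a * b) %% p)%N.
Proof. by rewrite /=; congr (_ %% _)%N; exact: Fp_cast. Qed.
Lemma Fp_val_1 (p : nat) (hp : prime p) : nat_of_ord (1 : 'F_p) = 1%N.
Proof. by rewrite /= modn_small // (Fp_cast hp) prime_gt1. Qed.

Lemma Fp_to_props (p : nat) (L : fieldType) (hp : prime p) (hc : p \in [pchar L]) :
  [/\ {morph @Fp_to p L : x y / x + y}, {morph @Fp_to p L : x y / x * y},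
      @Fp_to p L 1 = 1 & @Fp_to p L 0 = 0].
Proof.
split.
- by move=> a b; rewrite /Fp_to Fp_val_add // GRing.natr_mod_pchar // natrD.
- by move=> a b; rewrite /Fp_to Fp_val_mul // GRing.natr_mod_pchar // natrM.
- by rewrite /Fp_to Fp_val_1.
- by [].
Qed.

Lemma map_poly_props (R S : comNzRingType) (f : R -> S) :
  {morph f : x y / x + y} -> {morph f : x y / x * y} -> f 1 = 1 -> f 0 = 0 ->
  [/\ {morph map_poly f : x y / x + y}, {morph map_poly f : x y / x * y}
      & map_poly f 1 = 1].
Proof.
move=> fD fM f1 f0; split.
- by move=> x y; apply/polyP => i; rewrite coefD !coef_map_id0 // coefD fD.
- move=> x y; apply/polyP => i; rewrite !coefM coef_map_id0 // coefM.
  rewrite (big_morph f fD f0); apply: eq_bigr => j _.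
  by rewrite fM !coef_map_id0.
- by apply/polyP => i; rewrite coef_map_id0 // !coefC; case: (i == 0)%N.
Qed.

Lemma Phi_L (p : nat) (L : fieldType) (t : L) (hp : prime p) (hc : p \in [pchar L]) :
  transcendental_Fp p t ->
  exists Ph : FpT p -> L, [/\ {morph Ph : x y / x + y}, {morph Ph : x y / x * y},
     Ph 1 = 1 & Ph (varT p) = t].
Proof.
move=> htr.
have [fD fM f1 f0] := Fp_to_props hp hc.
have [mD mM m1] := map_poly_props fD fM f1 f0.
set phi := fun q : {poly 'F_p} => (map_poly (@Fp_to p L) q).[t].
have pD : {morph phi : x y / x + y} by move=> x y; rewrite /phi mD hornerD.
have pM : {morph phi : x y / x * y} by move=> x y; rewrite /phi mM hornerM.
have p1 : phi 1 = 1 by rewrite /phi m1 hornerC.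
have pnz : forall q, q != 0 -> phi q != 0 by move=> q /htr.
have [PD PM P1 PE] := Phi_props pD pM p1 pnz.
exists (Phi phi); split => //.
rewrite /varT PE /phi.
have -> : map_poly (@Fp_to p L) 'X = 'X.
  apply/polyP => i; rewrite coef_map_id0 // !coefX; case: (i == 1)%N => //.
by rewrite hornerX.
Qed.

Lemma Phi_sigma (p : nat) :
  exists Ph : FpT p -> FpT p, [/\ {morph Ph : x y / x + y}, {morph Ph : x y / x * y},
     Ph 1 = 1 & Ph (varT p) = varT p ^+ 2 + varT p].
Proof.
set r : {poly 'F_p} := 'X ^+ 2 + 'X.
have hsX : (size ('X : {poly 'F_p}) < size ('X ^+ 2 : {poly 'F_p}))%N.
  by rewrite size_polyX size_polyXn.
have hsr : (1 < size r)%N by rewrite /r size_addl // size_polyXn.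
have hlr : lead_coef r = 1 by rewrite /r lead_coefDl // lead_coefXn.
set phi := fun q : {poly 'F_p} => FracField.tofrac (q \Po r) : FpT p.
have pD : {morph phi : x y / x + y} by move=> x y; rewrite /phi comp_polyD tofracD.
have pM : {morph phi : x y / x * y} by move=> x y; rewrite /phi comp_polyM tofracM.
have p1 : phi 1 = 1 by rewrite /phi -polyC1 comp_polyC polyC1 tofrac1.
have pnz : forall q, q != 0 -> phi q != 0.
  move=> q hq; rewrite /phi tofrac_eq0 -lead_coef_eq0 lead_coef_comp // hlr expr1n mulr1.
  by rewrite lead_coef_eq0.
have [PD PM P1 PE] := Phi_props pD pM p1 pnz.
exists (Phi phi); split => //.
by rewrite /varT PE /phi comp_polyX /r tofracD tofracXn.
Qed.


Lemma nonsq (p : nat) (c : 'F_p) (h : {poly 'F_p}) : ~~ root h c ->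
  forall w : FpT p, FracField.tofrac (('X - c%:P) * h) != w ^+ 2.
Proof.
move=> hr w; apply/eqP => E.
have [n [d [hd ew]]] := frac_repr w.
set g := ('X - c%:P) * h in E.
have hdF : FracField.tofrac d != 0 by rewrite tofrac_eq0.
have e : g * (d * d) = n * n.
  by apply/eqP; rewrite -tofrac_eq (tofracM g) (tofracM d d) (tofracM n n) E ew expr2 mulrACA divfK.
have h0 : h != 0 by apply: contraNneq hr => ->; rewrite root0.
have g0 : g != 0 by rewrite mulf_neq0 // polyXsubC_eq0.
have n0 : n != 0.
  apply: contra_neq (mulf_neq0 g0 (mulf_neq0 hd hd)) => n0.
  by rewrite e n0 mul0r.
have := congr1 (mup c) e.
rewrite !mupM ?mulf_neq0 ?polyXsubC_eq0 // (mupNroot hr).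
have := mup_XsubCX 1 c c; rewrite expr1 eqxx => ->.
move/(congr1 odd); rewrite addn0 /= !addnn !odd_double.
by [].
Qed.

Lemma cls_step (K : fieldType) (c z d s w : K) (bo : bool) :
  c != 0 -> w != 0 -> d != 0 -> z = (if bo then c else 1) * w ^+ 2 ->
  c * z * d = s ^+ 2 -> exists w', w' != 0 /\ d = (if ~~ bo then c else 1) * w' ^+ 2.
Proof.
move=> hc hw hd hz hs.
have z0 : z != 0 by rewrite hz; case: (bo); rewrite ?mul1r mulf_neq0 ?expf_neq0.
have s0 : s != 0.
  by apply: contra_neq (mulf_neq0 (mulf_neq0 hc z0) hd) => s0; rewrite hs s0 expr0n.
exists (s / (c * w)); split; first by rewrite mulf_neq0 ?invr_eq0 ?mulf_neq0.
rewrite expr_div_n -hs hz; case: (bo) => /=; field; rewrite ?hc ?hw //.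
Qed.

Lemma two_neq0_Fp (p : nat) (hp : prime p) (hp2 : p != 2%N) : (2 : 'F_p) != 0.
Proof.
apply/eqP => h.
have := val_Fp_nat hp 2; rewrite h /= modn_small //.
by rewrite ltn_neqAle eq_sym hp2 prime_gt1.
Qed.

Lemma two_neq0 (p : nat) (hp : prime p) (hp2 : p != 2%N) : (2 : FpT p) != 0.
Proof.
have -> : (2 : FpT p) = FracField.tofrac ((2 : 'F_p)%:P).
  by rewrite polyC_natr rmorph_nat.
by rewrite tofrac_eq0 polyC_eq0 two_neq0_Fp.
Qed.

Lemma nonsq' (p : nat) (c : 'F_p) (h : {poly 'F_p}) (z : FpT p) : ~~ root h c ->
  z = FracField.tofrac (('X - c%:P) * h) -> forall w, z != w ^+ 2.
Proof. by move=> hr -> w; apply: nonsq. Qed.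

Definition tt (p : nat) : FpT p := varT p ^+ 2 + varT p.

Lemma main_F (p : nat) (hp : prime p) (hp2 : p != 2%N) :
  infinite_order (tt p) (- tt p ^+ 3) (Some (- tt p, tt p ^+ 2)).
Proof.
have h2 := two_neq0 hp hp2.
have u0 : varT p != 0 by rewrite tofrac_eq0 polyX_eq0.
have u1 : 1 + varT p != 0.
  rewrite /varT -tofrac1 -tofracD tofrac_eq0.
  have -> : (1 + 'X : {poly 'F_p}) = 'X - (-1)%:P by rewrite polyCN opprK polyC1 addrC.
  by rewrite polyXsubC_eq0.
have t0 : tt p != 0.
  have -> : tt p = varT p * (1 + varT p) by rewrite /tt; ring.
  exact: mulf_neq0 u0 u1.
have u2 : 1 + 2 * varT p != 0.
  rewrite /varT (_ : 1 + 2 * _ = FracField.tofrac (1 + 2%:R * 'X)); last first.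
    by rewrite rmorphD rmorph1 rmorphM rmorph_nat.
  rewrite tofrac_eq0; apply/eqP => h.
  have := congr1 (fun q : {poly 'F_p} => q`_1) h.
  rewrite coefD coefC /= add0r mulr_natl coefMn coefX /= coef0 => /eqP.
  by rewrite (negbTE (two_neq0_Fp hp hp2)).
have ns_t : forall w, tt p != w ^+ 2.
  apply: (@nonsq' p 0 ('X + 1%:P)).
    by rewrite /root !hornerE ?oner_neq0.
  by rewrite polyC0 subr0 rmorphM rmorphD polyC1 rmorph1 /tt /varT; ring.
have ns_mt : forall w, - tt p != w ^+ 2.
  apply: (@nonsq' p 0 (- ('X + 1%:P))).
    by rewrite /root !hornerE ?add0r ?oppr_eq0 ?oner_neq0.
  by rewrite polyC0 subr0 rmorphM rmorphN rmorphD polyC1 rmorph1 /tt /varT; ring.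
have ns_m1u : forall w, - (1 + varT p) != w ^+ 2.
  apply: (@nonsq' p (-1) (-1)).
    by rewrite /root !hornerE ?oppr_eq0 ?oner_neq0.
  by rewrite polyCN polyC1 opprK rmorphM rmorphN rmorphD rmorph1 /varT; ring.
have ns_mu : forall w, - varT p != w ^+ 2.
  apply: (@nonsq' p 0 (-1)).
    by rewrite /root !hornerE ?oppr_eq0 ?oner_neq0.
  by rewrite polyC0 subr0 rmorphM rmorphN rmorph1 /varT; ring.
have ns_1u : forall w, 1 + varT p != w ^+ 2.
  apply: (@nonsq' p (-1) 1).
    by rewrite /root !hornerE ?oner_neq0.
  by rewrite polyCN polyC1 opprK mulr1 rmorphD rmorph1 /varT; ring.
set t := tt p.
have tE : t = varT p ^+ 2 + varT p by [].
set u := varT p in tE u0 u1 u2 ns_m1u ns_mu ns_1u.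
pose e1 := t * u.
pose e2 := - (t * (1 + u)).
have fac : forall z, fc t (- t ^+ 3) z = z * (z - e1) * (z - e2).
  by move=> z; rewrite /fc /e1 /e2 tE; ring.
have e1n0 : e1 != 0 by exact: mulf_neq0 t0 u0.
have e2n0 : e2 != 0 by rewrite oppr_eq0; exact: mulf_neq0 t0 u1.
have e12 : e1 - e2 != 0.
  have -> : e1 - e2 = t * (1 + 2 * u) by rewrite /e1 /e2; ring.
  exact: mulf_neq0 t0 u2.
have roots : forall z, fc t (- t ^+ 3) z = 0 -> [\/ z = 0, z = e1 | z = e2].
  move=> z; rewrite fac => /eqP; rewrite !mulf_eq0 !subr_eq0.
  by case/orP => [/orP [] | ] /eqP ->; [apply: Or31 | apply: Or32 | apply: Or33].
have hns : nsing t (- t ^+ 3).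
  move=> z /roots [] ->.
  - rewrite expr0n /= !mulr0 !add0r oppr_eq0; exact: expf_neq0 t0.
  - have -> : 3 * e1 ^+ 2 + 2 * t * e1 + - t ^+ 3 = e1 * (e1 - e2) by rewrite /e1 /e2 tE; ring.
    exact: mulf_neq0 e1n0 e12.
  - have -> : 3 * e2 ^+ 2 + 2 * t * e2 + - t ^+ 3 = e2 * - (e1 - e2) by rewrite /e1 /e2 tE; ring.
    by apply: mulf_neq0 e2n0 _; rewrite oppr_eq0; exact: e12.
move=> N N0 HN.
pose Q : ec_point (FpT p) := Some (- t, t ^+ 2).
have cQ : (t ^+ 2) ^+ 2 = fc t (- t ^+ 3) (- t) by rewrite /fc; ring.
pose R n := ec_mul t (- t ^+ 3) n Q.
have RS : forall n, R n.+1 = ec_add t (- t ^+ 3) Q (R n) by [].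
have Ron : forall n, on_curve t (- t ^+ 3) (R n).
  by elim=> [|n IH] //; rewrite RS; exact: (ec_add_on h2 (cQ : on_curve t (- t ^+ 3) Q) IH).
pose bad n := (0 < n)%N && (if R n is Some (_, y) then y == 0 else true).
have exb : exists n, bad n by exists N; rewrite /bad N0; move: HN; rewrite /R => ->.
case: (ex_minnP exb) => m /andP [m0 bm] mmin.
have notbad : forall n, (0 < n)%N -> (n < m)%N -> exists x y, R n = Some (x, y) /\ y != 0.
  move=> n n0 nm; case E : (R n) => [[x y]|].
    exists x, y; split; first by [].
    apply/negP => y0.
    by have := mmin n; rewrite /bad n0 E y0 => /(_ isT); rewrite leqNgt nm.
  by have := mmin n; rewrite /bad n0 E => /(_ isT); rewrite leqNgt nm.
have R1 : R 1%N = Q by [].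
have m1 : (1 < m)%N.
  rewrite ltn_neqAle eq_sym m0 andbT; apply/eqP => m1.
  by move: bm; rewrite m1 R1 /= sqrf_eq0 (negbTE t0).
pose cls e n x := exists w, w != 0 /\ x - e = (if odd n then - t - e else 1) * w ^+ 2.
have curve_root : forall x y, on_curve t (- t ^+ 3) (Some (x, y)) -> y != 0 ->
    forall e, fc t (- t ^+ 3) e = 0 -> x - e != 0.
  move=> x y /= c yn e he; rewrite subr_eq0; apply/eqP => xe.
  by move: yn; rewrite -sqrf_eq0 c -/(fc _ _ x) xe he eqxx.
have he0 : fc t (- t ^+ 3) 0 = 0 by rewrite fac !mul0r.
have he1 : fc t (- t ^+ 3) e1 = 0 by rewrite fac subrr mulr0 mul0r.
have c0 : - t - 0 != 0 by rewrite subr0 oppr_eq0; exact: t0.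
have c1 : - t - e1 != 0.
  have -> : - t - e1 = - (t * (1 + u)) by rewrite /e1; ring.
  by rewrite oppr_eq0; exact: mulf_neq0 t0 u1.
have dstep : forall n x y x' y' e, R n = Some (x, y) -> R n.+1 = Some (x', y') -> y' != 0 ->
    fc t (- t ^+ 3) e = 0 -> - t - e != 0 -> cls e n x -> cls e n.+1 x'.
  move=> n x y x' y' e Rn Rn1 y'n he ce [w [wn hw]].
  have cR := Ron n; rewrite Rn in cR.
  have cR' := Ron n.+1; rewrite Rn1 in cR'.
  have E : ec_add t (- t ^+ 3) (Some (- t, t ^+ 2)) (Some (x, y)) = Some (x', y').
    by rewrite -Rn1 RS Rn.
  have [s hs] := descent h2 cQ cR E he.
  have := cls_step ce wn (curve_root _ _ cR' y'n e he) hw hs.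
  by rewrite /cls /=.
have inv : forall n, (0 < n)%N -> (n < m)%N -> exists x y, R n = Some (x, y) /\ y != 0 /\
    cls 0 n x /\ cls e1 n x.
  elim=> [|n IH] // _ nm.
  have [x' [y' [Rn1 y'n]]] := notbad n.+1 isT nm.
  case: (posnP n) => [n0|np].
    subst n.
    exists (- t), (t ^+ 2); split; first exact: R1.
    split; first exact: expf_neq0 t0.
    by split; exists 1; split; rewrite ?oner_neq0 ?expr1n ?mulr1.
  have [x [y [Rn [yn [cl0 cl1]]]]] := IH np (ltnW nm).
  exists x', y'; split; first exact: Rn1.
  split; first exact: y'n.
  split.
    exact: dstep Rn Rn1 y'n he0 c0 cl0.
  exact: dstep Rn Rn1 y'n he1 c1 cl1.
have [k ek] : exists k, m = k.+1 by exists m.-1; rewrite prednK // ltnW.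
have k0 : (0 < k)%N by rewrite -ltnS -ek.
have km : (k < m)%N by rewrite ek.
have [x [y [Rk [yn [cl0 cl1]]]]] := inv k k0 km.
have cRk := Ron k; rewrite Rk in cRk.
have Rm : R m = ec_add t (- t ^+ 3) Q (Some (x, y)) by rewrite ek RS Rk.
case Em : (R m) => [[xm ym]|].
  have ym0 : ym = 0 by move: bm; rewrite Em => /eqP.
  have cm := Ron m; rewrite Em /= ym0 expr0n /= in cm.
  have fm : fc t (- t ^+ 3) xm = 0 by rewrite /fc -cm.
  have E : ec_add t (- t ^+ 3) (Some (- t, t ^+ 2)) (Some (x, y)) = Some (xm, ym).
    by rewrite -Em Rm.
  have dfin : forall e, fc t (- t ^+ 3) e = 0 -> - t - e != 0 -> xm - e != 0 -> cls e k x ->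
      exists w', w' != 0 /\ xm - e = (if ~~ odd k then - t - e else 1) * w' ^+ 2.
    move=> e he ce de [w [wn hw]]; have [s hs] := descent h2 cQ cRk E he.
    exact: cls_step ce wn de hw hs.
  case: (roots xm fm) => xe.
  - have de : xm - e1 != 0 by rewrite xe sub0r oppr_eq0; exact: e1n0.
    have [w' [wn' hw']] := dfin e1 he1 c1 de cl1.
    rewrite xe in hw'.
    case: (odd k) hw' => /= hw'.
      have a2 : (w' ^+ 2) = - e1 by rewrite -[w' ^+ 2]mul1r -hw'; ring.
      move/negP: (ns_m1u (w' / u)); apply; apply/eqP.
      rewrite expr_div_n a2.
      have -> : - e1 = - (1 + u) * u ^+ 2 by rewrite /e1 tE; ring.
      by rewrite (mulfK (expf_neq0 2 u0)).
    have a2 : ((- t - e1) * w') ^+ 2 = t ^+ 3.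
      have -> : ((- t - e1) * w') ^+ 2 = (- t - e1) * ((- t - e1) * w' ^+ 2) by ring.
      by rewrite -hw' /e1 tE; ring.
    move/negP: (ns_t ((- t - e1) * w' / t)); apply; apply/eqP.
    by rewrite expr_div_n a2 exprS (mulfK (expf_neq0 2 t0)).
  - have de : xm - 0 != 0 by rewrite xe subr0; exact: e1n0.
    have [w' [wn' hw']] := dfin 0 he0 c0 de cl0.
    rewrite xe subr0 in hw'.
    case: (odd k) hw' => /= hw'.
      move/negP: (ns_1u (w' / u)); apply; apply/eqP.
      rewrite expr_div_n -[w' ^+ 2]mul1r -hw'.
      have -> : e1 = (1 + u) * u ^+ 2 by rewrite /e1 tE; ring.
      by rewrite (mulfK (expf_neq0 2 u0)).
    move/negP: (ns_mu w'); apply; apply/eqP.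
    apply: (@mulfI _ t t0).
    have -> : t * - u = - e1 by rewrite /e1; ring.
    by rewrite hw'; ring.
  - have de : xm - 0 != 0 by rewrite xe subr0; exact: e2n0.
    have [w' [wn' hw']] := dfin 0 he0 c0 de cl0.
    rewrite xe subr0 in hw'.
    case: (odd k) hw' => /= hw'.
      move/negP: (ns_mu (w' / (1 + u))); apply; apply/eqP.
      rewrite expr_div_n -[w' ^+ 2]mul1r -hw'.
      have -> : e2 = - u * (1 + u) ^+ 2 by rewrite /e2 tE; ring.
      by rewrite (mulfK (expf_neq0 2 u1)).
    move/negP: (ns_1u w'); apply; apply/eqP.
    apply: (@mulfI _ (- t)); first by rewrite oppr_eq0; exact: t0.
    have -> : - t * (1 + u) = e2 by rewrite /e2; ring.
    by rewrite hw'; ring.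
have hx : - t = x.
  by move: Em; rewrite Rm /ec_add /=; case: eqP => // hx _.
have [w [wn hw]] := cl0.
case ok : (odd k) hw => hw.
  have refl : forall i, (i <= m)%N -> R (m - i)%N = negp (R i).
    elim=> [|i IH] hi; first by rewrite subn0 Em.
    have em : (m - i = (m - i.+1).+1)%N by rewrite subnSK.
    have c := ec_cancel h2 hns cQ (Ron (m - i.+1)%N).
    have RS' : ec_add t (- t ^+ 3) (Some (- t, t ^+ 2)) (R (m - i.+1)%N) = R (m - i)%N.
      by rewrite em.
    rewrite RS' (IH (ltnW hi)) in c.
    by rewrite -c (RS i) -ec_add_neg.
  have om : odd m = false by rewrite ek /= ok.
  pose j := m./2.
  have hj : (j + j = m)%N by rewrite addnn -[RHS](odd_double_half m) om.
  have j0 : (0 < j)%N by rewrite lt0n; apply/eqP => j0; move: m0; rewrite -hj j0.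
  have jm : (j < m)%N by rewrite -hj -addn1 leq_add2l.
  have := refl j (ltnW jm); rewrite (_ : m - j = j)%N; last by rewrite -hj addnK.
  have [x' [y' [Rj yj]]] := notbad j j0 jm.
  rewrite Rj /= => -[hy].
  have : 2 * y' = 0 by rewrite mulr_natl mulr2n {1}hy addNr.
  move/eqP; rewrite mulf_eq0 (negbTE h2) /= => /eqP y0.
  by rewrite y0 eqxx in yj.
move/negP: (ns_mt w); apply; apply/eqP.
by rewrite hx -[x]subr0 hw mul1r.
Qed.

Lemma morph_X (K L : fieldType) (f : K -> L) :
  {morph f : x y / x * y} -> f 1 = 1 -> forall x k, f (x ^+ k) = f x ^+ k.
Proof. by move=> fM f1 x; elim=> [|k IH]; rewrite ?expr0 ?f1 // !exprS fM IH. Qed.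

Lemma transfer_fwd (K L : fieldType) (f : K -> L) (v : K) (w : L) :
  {morph f : x y / x + y} -> {morph f : x y / x * y} -> f 1 = 1 -> f v = w ->
  infinite_order v (- v ^+ 3) (Some (- v, v ^+ 2)) ->
  infinite_order w (- w ^+ 3) (Some (- w, w ^+ 2)).
Proof.
move=> fD fM f1 fv H n n0 E.
have [f0 fN fV fn feq] := morph_facts fD fM f1.
have fX := morph_X fM f1.
have e := ec_mul_map v (- v ^+ 3) n (Some (- v, v ^+ 2)) fD fM f1.
rewrite /= !fN !fX fv E in e.
move: e; case: (ec_mul v (- v ^+ 3) n (Some (- v, v ^+ 2))) (H n n0) => [[x y]|] //.
Qed.

Lemma transfer_back (K L : fieldType) (f : K -> L) (v : K) (w : L) :
  {morph f : x y / x + y} -> {morph f : x y / x * y} -> f 1 = 1 -> f v = w ->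
  infinite_order w (- w ^+ 3) (Some (- w, w ^+ 2)) ->
  infinite_order v (- v ^+ 3) (Some (- v, v ^+ 2)).
Proof.
move=> fD fM f1 fv H n n0 E.
have [f0 fN fV fn feq] := morph_facts fD fM f1.
have fX := morph_X fM f1.
have e := ec_mul_map v (- v ^+ 3) n (Some (- v, v ^+ 2)) fD fM f1.
rewrite /= !fN !fX fv E /= in e.
exact: (H n n0 e).
Qed.

Unset Implicit Arguments.

Theorem corollary2p6 (p : nat) (hp : prime p) (hp2 : p != 2%N) :
  (on_curve (varT p) (- varT p ^+ 3) (Some (- varT p, varT p ^+ 2)) /\
   infinite_order (varT p) (- varT p ^+ 3) (Some (- varT p, varT p ^+ 2)))
  /\
  (forall (L : fieldType) (t : L), p \in [pchar L] -> transcendental_Fp p t ->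
     on_curve t (- t ^+ 3) (Some (- t, t ^+ 2)) /\
     infinite_order t (- t ^+ 3) (Some (- t, t ^+ 2))).
Proof.
have oc : forall (K : fieldType) (t : K), on_curve t (- t ^+ 3) (Some (- t, t ^+ 2)).
  by move=> K t /=; ring.
have io : infinite_order (varT p) (- varT p ^+ 3) (Some (- varT p, varT p ^+ 2)).
  have [Ph [PD PM P1 PT]] := Phi_sigma p.
  exact: (transfer_back PD PM P1 PT (main_F hp hp2)).
split; first by split; [exact: oc | exact: io].
move=> L t hc htr; split; first exact: oc.
have [Ph [PD PM P1 PT]] := Phi_L hp hc htr.
exact: (transfer_fwd PD PM P1 PT io).
Qed.
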